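(* Let $H$ be an infinite-dimensional (not necessarily separable) Hilbert space and let $\mathcal{T}\subseteq B_1$. For $T\in\mathcal{T}$ define $\phi_T:B_1\to B_1$ by $\phi_T(A)=AT$. Then the family $\mathcal{T}^*=\{T^*:T\in\mathcal{T}\}$, regarded as a family of maps $H_1\to H_1$, is UEC if and only if the family $\{\phi_T\}_{T\in\mathcal{T}}$ of maps $B_1\to B_1$ is UEC.
   Context: $H_1$ is the closed unit ball of $H$ and $B_1$ the closed unit ball of $B(H)$. $H_1$ carries the (weak) uniformity whose basic entourages are the sets $\{(x,y)\in H_1\times H_1: |\langle x-y,z_i\rangle|<\epsilon,\ i=1,\dots,N\}$ with $z_i\in H_1$, $N\in\mathbb{N}$, $\epsilon>0$; $B_1$ carries the (weak operator) uniformity whose basic entourages are the sets $\{(A,B)\in B_1\times B_1: |\langle (A-B)w_i,z_i\rangle|<\epsilon,\ i=1,\dots,N\}$ with $w_i,z_i\in H_1$, $N\in\mathbb{N}$, $\epsilon>0$. A family $\mathcal{F}$ of maps from a uniform space $X$ to itself is uniformly equicontinuous (UEC) if for every entourage $U$ there is an entourage $W$ such that $(x,y)\in W$ implies $(f(x),f(y))\in U$ for all $f\in\mathcal{F}$. *)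

(* Defs.v *)
From Stdlib Require Import Reals List.
Open Scope R_scope.

Record C := mkC { Re : R; Im : R }.
Definition C0 : C := mkC 0 0.
Definition C1 : C := mkC 1 0.
Definition Cadd (a b : C) : C := mkC (Re a + Re b) (Im a + Im b).
Definition Cmul (a b : C) : C :=
  mkC (Re a * Re b - Im a * Im b) (Re a * Im b + Im a * Re b).
Definition Cconj (a : C) : C := mkC (Re a) (- Im a).
Definition Cmod (a : C) : R := sqrt (Re a * Re a + Im a * Im a).

Record Hilbert := {
  hcar :> Type;
  hzero : hcar;
  hadd : hcar -> hcar -> hcar;
  hopp : hcar -> hcar;
  hscal : C -> hcar -> hcar;
  hinner : hcar -> hcar -> C;
  hadd_assoc : forall x y z, hadd x (hadd y z) = hadd (hadd x y) z;
  hadd_comm : forall x y, hadd x y = hadd y x;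
  hadd_zero : forall x, hadd x hzero = x;
  hadd_opp : forall x, hadd x (hopp x) = hzero;
  hscal_one : forall x, hscal C1 x = x;
  hscal_assoc : forall a b x, hscal a (hscal b x) = hscal (Cmul a b) x;
  hscal_addv : forall a x y, hscal a (hadd x y) = hadd (hscal a x) (hscal a y);
  hscal_adds : forall a b x, hscal (Cadd a b) x = hadd (hscal a x) (hscal b x);
  hinner_add : forall x y z, hinner (hadd x y) z = Cadd (hinner x z) (hinner y z);
  hinner_scal : forall a x z, hinner (hscal a x) z = Cmul a (hinner x z);
  hinner_conj : forall x y, hinner y x = Cconj (hinner x y);
  hinner_pos : forall x, 0 <= Re (hinner x x);
  hinner_def : forall x, hinner x x = C0 -> x = hzero;
  hcomplete : forall u : nat -> hcar,
    (forall eps, 0 < eps -> exists N, forall m n, (N <= m)%nat -> (N <= n)%nat ->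
        sqrt (Re (hinner (hadd (u m) (hopp (u n))) (hadd (u m) (hopp (u n))))) < eps) ->
    exists l, forall eps, 0 < eps -> exists N, forall n, (N <= n)%nat ->
        sqrt (Re (hinner (hadd (u n) (hopp l)) (hadd (u n) (hopp l)))) < eps
}.

Arguments hzero {h}. Arguments hadd {h}. Arguments hopp {h}.
Arguments hscal {h}. Arguments hinner {h}.

Section HilbertDefs.
Variable H : Hilbert.

Definition hsub (x y : H) : H := hadd x (hopp y).
Definition hnorm (x : H) : R := sqrt (Re (hinner x x)).

Definition infinite_dimensional : Prop :=
  forall n : nat, exists e : nat -> H,
    forall i j, (i < n)%nat -> (j < n)%nat ->
      hinner (e i) (e j) = (if Nat.eqb i j then C1 else C0).

Definition VecBall1 (x : H) : Prop := hnorm x <= 1.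

Definition is_linear (T : H -> H) : Prop :=
  (forall x y, T (hadd x y) = hadd (T x) (T y)) /\
  (forall a x, T (hscal a x) = hscal a (T x)).

Definition OpBall1 (T : H -> H) : Prop :=
  is_linear T /\ forall x, hnorm (T x) <= hnorm x.

Definition is_adjoint (T S : H -> H) : Prop :=
  forall x y, hinner (T x) y = hinner x (S y).

(* Uniform equicontinuity of a family F of maps H_1 -> H_1, for the weak
   uniformity on H_1 (stated with basic entourages). *)
Definition UEC_H1 (F : (H -> H) -> Prop) : Prop :=
  forall (zs : list H) (eps : R), (forall z, In z zs -> VecBall1 z) -> 0 < eps ->
  exists (ws : list H) (delta : R),
    (forall w, In w ws -> VecBall1 w) /\ 0 < delta /\
    forall x y, VecBall1 x -> VecBall1 y ->
      (forall w, In w ws -> Cmod (hinner (hsub x y) w) < delta) ->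
      forall f, F f -> forall z, In z zs ->
        Cmod (hinner (hsub (f x) (f y)) z) < eps.

(* Uniform equicontinuity of a family G of maps B_1 -> B_1, for the weak
   operator uniformity on B_1 (stated with basic entourages, indexed by
   finite lists of pairs (w_i, z_i)). *)
Definition UEC_B1 (G : ((H -> H) -> (H -> H)) -> Prop) : Prop :=
  forall (ps : list (H * H)) (eps : R),
    (forall p, In p ps -> VecBall1 (fst p) /\ VecBall1 (snd p)) -> 0 < eps ->
  exists (qs : list (H * H)) (delta : R),
    (forall q, In q qs -> VecBall1 (fst q) /\ VecBall1 (snd q)) /\ 0 < delta /\
    forall A B, OpBall1 A -> OpBall1 B ->
      (forall q, In q qs ->
         Cmod (hinner (hsub (A (fst q)) (B (fst q))) (snd q)) < delta) ->
      forall g, G g -> forall p, In p ps ->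
        Cmod (hinner (hsub (g A (fst p)) (g B (fst p))) (snd p)) < eps.

Definition adjoint_family (Tc : (H -> H) -> Prop) (S : H -> H) : Prop :=
  exists T, Tc T /\ is_adjoint T S.

Definition phi (T : H -> H) : (H -> H) -> (H -> H) := fun A x => A (T x).

Definition phi_family (Tc : (H -> H) -> Prop) (g : (H -> H) -> (H -> H)) : Prop :=
  exists T, Tc T /\ g = phi T.

End HilbertDefs.

(* Main.v *)
Require Import Defs.
From Stdlib Require Import Reals List Lra Psatz Classical ClassicalEpsilon.
Open Scope R_scope.

Definition Copp (a : Defs.C) : Defs.C := mkC (- Re a) (- Im a).

Lemma C_ext (a b : Defs.C) : Re a = Re b -> Im a = Im b -> a = b.
Proof. destruct a, b; simpl; intros; subst; reflexivity. Qed.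

Ltac cunf := unfold Cadd, Cmul, Cconj, Copp, Defs.C0, Defs.C1 in *; cbn [Re Im] in *.

Lemma ip_zero_l (H : Hilbert) (z : H) : hinner (@hzero H) z = C0.
Proof.
  pose proof (hinner_add H hzero hzero z) as E. rewrite hadd_zero in E.
  set (w := hinner hzero z) in *.
  pose proof (f_equal Re E) as E1. pose proof (f_equal Im E) as E2. cunf.
  apply C_ext; cunf; lra.
Qed.

Lemma ip_opp_l (H : Hilbert) (x z : H) : hinner (hopp x) z = Copp (hinner x z).
Proof.
  pose proof (hinner_add H x (hopp x) z) as E. rewrite hadd_opp, ip_zero_l in E.
  pose proof (f_equal Re E) as E1. pose proof (f_equal Im E) as E2. cunf.
  apply C_ext; cunf; lra.
Qed.

Lemma ip_add_r (H : Hilbert) (x y z : H) : hinner x (hadd y z) = Cadd (hinner x y) (hinner x z).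
Proof.
  rewrite (hinner_conj H (hadd y z) x), hinner_add, (hinner_conj H x y), (hinner_conj H x z).
  apply C_ext; cunf; ring.
Qed.

Lemma ip_scal_r (H : Hilbert) a (x y : H) : hinner x (hscal a y) = Cmul (Cconj a) (hinner x y).
Proof.
  rewrite (hinner_conj H (hscal a y) x), hinner_scal, (hinner_conj H x y).
  apply C_ext; cunf; ring.
Qed.

Lemma ip_opp_r (H : Hilbert) (x y : H) : hinner x (hopp y) = Copp (hinner x y).
Proof.
  rewrite (hinner_conj H (hopp y) x), ip_opp_l, (hinner_conj H x y).
  apply C_ext; cunf; ring.
Qed.

Lemma ip_zero_r (H : Hilbert) (x : H) : hinner x (@hzero H) = C0.
Proof.
  rewrite (hinner_conj H hzero x), ip_zero_l. apply C_ext; cunf; ring.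
Qed.

Ltac ipexp := unfold hsub in *; repeat progress (rewrite ?hinner_add, ?hinner_scal, ?ip_opp_l,
   ?ip_add_r, ?ip_scal_r, ?ip_opp_r, ?ip_zero_l, ?ip_zero_r in *).

Lemma Im_self (H : Hilbert) (x : H) : Im (hinner x x) = 0.
Proof. pose proof (f_equal Im (hinner_conj H x x)). cunf. lra. Qed.

Lemma Re_conj (H : Hilbert) (x y : H) : Re (hinner y x) = Re (hinner x y).
Proof. rewrite (hinner_conj H x y). reflexivity. Qed.
Lemma Im_conj (H : Hilbert) (x y : H) : Im (hinner y x) = - Im (hinner x y).
Proof. rewrite (hinner_conj H x y). reflexivity. Qed.

Lemma vec_eq (H : Hilbert) (x y : H) : (forall w, hinner x w = hinner y w) -> x = y.
Proof.
  intro E.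
  assert (Z : hsub H x y = hzero).
  { apply hinner_def. unfold hsub. rewrite hinner_add, ip_opp_l, E.
    apply C_ext; cunf; ring. }
  unfold hsub in Z.
  assert (hadd (hadd x (hopp y)) y = y) as E2 by (rewrite Z, hadd_comm, hadd_zero; reflexivity).
  rewrite <- hadd_assoc, (hadd_comm _ (hopp y)), hadd_opp, hadd_zero in E2. exact E2.
Qed.

Lemma Cmod_ge0 a : 0 <= Cmod a.
Proof. apply sqrt_pos. Qed.

Lemma Cmod_sq a : Cmod a * Cmod a = Re a * Re a + Im a * Im a.
Proof. unfold Cmod. apply sqrt_sqrt. nra. Qed.

Lemma Re_le_Cmod a : Re a <= Cmod a.
Proof.
  pose proof (Cmod_sq a). pose proof (Cmod_ge0 a). nra.
Qed.

Lemma Cmod_conj a : Cmod (Cconj a) = Cmod a.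
Proof. unfold Cmod; cunf. f_equal; ring. Qed.
Lemma Cmod_opp a : Cmod (Copp a) = Cmod a.
Proof. unfold Cmod; cunf. f_equal; ring. Qed.

Lemma Cmod_mul a b : Cmod (Cmul a b) = Cmod a * Cmod b.
Proof.
  unfold Cmod; cunf. rewrite <- sqrt_mult by nra. f_equal; ring.
Qed.

Lemma Cmod_eq0 a : Cmod a = 0 -> a = C0.
Proof.
  intro E. pose proof (Cmod_sq a). rewrite E in H.
  apply C_ext; cunf; nra.
Qed.

Lemma Cmod_real t : Cmod (mkC t 0) = Rabs t.
Proof. unfold Cmod; cbn [Re Im]. rewrite Rmult_0_l, Rplus_0_r. apply sqrt_Rsqr_abs. Qed.

Lemma hnorm_ge0 (H : Hilbert) (x : H) : 0 <= hnorm H x.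
Proof. apply sqrt_pos. Qed.
Lemma hnorm_sq (H : Hilbert) (x : H) : hnorm H x * hnorm H x = Re (hinner x x).
Proof. unfold hnorm. apply sqrt_sqrt, hinner_pos. Qed.

Lemma discr (a b c : R) : 0 <= c -> (forall t, 0 <= a - b * t + c * t * t) -> b * b <= 4 * a * c.
Proof.
  intros Hc Ht. destruct (Req_dec c 0) as [E|E].
  - subst. destruct (Req_dec b 0) as [Eb|Eb]. { subst; lra. }
    specialize (Ht ((a+1)/b)).
    replace (a - b * ((a + 1) / b) + 0 * ((a + 1) / b) * ((a + 1) / b)) with (-1) in Ht by (field; auto). lra.
  - specialize (Ht (b / (2*c))).
    assert (0 < c) by lra.
    assert (a - b * (b / (2 * c)) + c * (b / (2 * c)) * (b / (2 * c)) = a - b*b/(4*c)) as E2 by (field; lra).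
    rewrite E2 in Ht.
    assert (b*b/(4*c) <= a) by lra.
    apply Rmult_le_compat_r with (r := 4*c) in H0; [|lra].
    replace (b * b / (4 * c) * (4 * c)) with (b*b) in H0 by (field; lra). lra.
Qed.

Lemma CS_re (H : Hilbert) (x y : H) :
  Re (hinner x y) * Re (hinner x y) <= Re (hinner x x) * Re (hinner y y).
Proof.
  assert (forall t, 0 <= Re (hinner x x) - (2 * Re (hinner x y)) * t + Re (hinner y y) * t * t).
  { intro t. pose proof (hinner_pos H (hsub H x (hscal (mkC t 0) y))) as P.
    ipexp. cunf. rewrite (Re_conj H x y) in P. nra. }
  pose proof (discr _ _ _ (hinner_pos H y) H0). lra.
Qed.

Lemma CS (H : Hilbert) (x y : H) : Cmod (hinner x y) <= hnorm H x * hnorm H y.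
Proof.
  set (w := hinner x y).
  pose proof (CS_re H (hscal (Cconj w) x) y) as P.
  set (W := Re w * Re w + Im w * Im w).
  assert (E1 : Re (hinner (hscal (Cconj w) x) y) = W).
  { rewrite hinner_scal. fold w. unfold W. cunf. ring. }
  assert (E2 : Re (hinner (hscal (Cconj w) x) (hscal (Cconj w) x)) = W * Re (hinner x x)).
  { rewrite hinner_scal, ip_scal_r. unfold W. cunf. ring. }
  rewrite E1, E2 in P.

  assert (HW : Cmod w * Cmod w <= Re (hinner x x) * Re (hinner y y)).
  { rewrite Cmod_sq. fold W.
    assert (0 <= W) by (unfold W; nra).
    pose proof (hinner_pos H x); pose proof (hinner_pos H y).
    destruct (Req_dec W 0) as [Z|Z]. { rewrite Z. nra. }
    assert (0 < W) by lra.
    apply Rmult_le_reg_l with W; [lra|]. nra. }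
  pose proof (hnorm_sq H x); pose proof (hnorm_sq H y).
  pose proof (hnorm_ge0 H x); pose proof (hnorm_ge0 H y); pose proof (Cmod_ge0 w).
  assert (Hp : Cmod w * Cmod w <= (hnorm H x * hnorm H y) * (hnorm H x * hnorm H y)) by nra.
  assert (0 <= hnorm H x * hnorm H y) by nra.
  destruct (Rle_or_lt (Cmod w) (hnorm H x * hnorm H y)) as [L|L]; [exact L|].
  exfalso. assert (hnorm H x * hnorm H y * (hnorm H x * hnorm H y) < Cmod w * Cmod w).
  { apply Rle_lt_trans with (hnorm H x * hnorm H y * Cmod w); [apply Rmult_le_compat_l; lra|].
    apply Rmult_lt_compat_r; lra. }
  lra.
Qed.

Lemma hnorm_scal (H : Hilbert) a (x : H) : hnorm H (hscal a x) = Cmod a * hnorm H x.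
Proof.
  unfold hnorm, Cmod. rewrite hinner_scal, ip_scal_r. rewrite <- sqrt_mult.
  - f_equal. cunf. rewrite (Im_self H x). ring.
  - nra.
  - apply hinner_pos.
Qed.

Lemma hnorm_triangle (H : Hilbert) (a b : H) : hnorm H (hadd a b) <= hnorm H a + hnorm H b.
Proof.
  pose proof (CS H a b) as P. pose proof (Re_le_Cmod (hinner a b)).
  assert (E : Re (hinner (hadd a b) (hadd a b)) = Re (hinner a a) + Re (hinner b b) + 2 * Re (hinner a b)).
  { ipexp. cunf. rewrite (Re_conj H a b). ring. }
  pose proof (hnorm_sq H a); pose proof (hnorm_sq H b); pose proof (hnorm_sq H (hadd a b)).
  pose proof (hnorm_ge0 H a); pose proof (hnorm_ge0 H b); pose proof (hnorm_ge0 H (hadd a b)).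
  nra.
Qed.

Definition flin (H : Hilbert) (f : H -> Defs.C) : Prop :=
  (forall x y, f (hadd x y) = Cadd (f x) (f y)) /\ (forall a x, f (hscal a x) = Cmul a (f x)).

Lemma f_zero H f : flin H f -> f hzero = C0.
Proof.
  intros [Fa Fs]. pose proof (Fa hzero hzero) as E. rewrite hadd_zero in E.
  pose proof (f_equal Re E); pose proof (f_equal Im E). apply C_ext; cunf; lra.
Qed.

Lemma f_opp H f x : flin H f -> f (hopp x) = Copp (f x).
Proof.
  intros Hf. pose proof (f_zero H f Hf). destruct Hf as [Fa Fs].
  pose proof (Fa x (hopp x)) as E. rewrite hadd_opp, H0 in E.
  pose proof (f_equal Re E); pose proof (f_equal Im E). apply C_ext; cunf; lra.
Qed.

Lemma small_inv x : 0 < x -> exists N, forall n, (N <= n)%nat -> / (INR n + 1) < x.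
Proof.
  intro Hx. destruct (archimed_cor1 x Hx) as [N [HN HN0]]. exists N. intros n Hn.
  apply le_INR in Hn. apply lt_INR in HN0. simpl in HN0.
  apply Rle_lt_trans with (/ INR N); [|exact HN].
  apply Rinv_le_contravar; lra.
Qed.

Lemma inv_pos n : 0 < / (INR n + 1).
Proof. apply Rinv_0_lt_compat. pose proof (pos_INR n). lra. Qed.
Lemma inv_le1 n : / (INR n + 1) <= 1.
Proof. pose proof (pos_INR n). rewrite <- Rinv_1. apply Rinv_le_contravar; lra. Qed.

Lemma orth_from_min H f u k0 : flin H f -> f k0 = C0 ->
  (forall k, f k = C0 -> Re (hinner (hsub H u k0) (hsub H u k0)) <= Re (hinner (hsub H u k) (hsub H u k))) ->
  forall k, f k = C0 -> hinner k (hsub H u k0) = C0.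
Proof.
  intros Hf Hk0 Hmin.
  assert (Var : forall k, f k = C0 -> forall t,
     Re (hinner (hsub H u k0) (hsub H u k0)) <=
     Re (hinner (hsub H (hsub H u k0) (hscal (mkC t 0) k)) (hsub H (hsub H u k0) (hscal (mkC t 0) k)))).
  { intros k Hk t.
    assert (E : hsub H (hsub H u k0) (hscal (mkC t 0) k) = hsub H u (hadd k0 (hscal (mkC t 0) k))).
    { apply vec_eq. intro w. ipexp. apply C_ext; cunf; ring. }
    rewrite E. apply Hmin. destruct Hf as [Fa Fs]. rewrite Fa, Fs, Hk, Hk0.
    apply C_ext; cunf; ring. }
  remember (hsub H u k0) as z eqn:Ez. clear Ez Hmin.
  assert (Re0 : forall k, f k = C0 -> Re (hinner k z) = 0).
  { intros k Hk.
    assert (forall t, 0 <= 0 - (2 * Re (hinner k z)) * t + Re (hinner k k) * t * t).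
    { intro t. pose proof (Var k Hk t) as V. ipexp. cunf. rewrite (Re_conj H k z) in V. nra. }
    pose proof (discr _ _ _ (hinner_pos H k) H0). nra. }
  intros k Hk. apply C_ext.
  - rewrite Re0 by exact Hk. reflexivity.
  - assert (Hik : f (hscal (mkC 0 1) k) = C0).
    { destruct Hf as [Fa Fs]. rewrite Fs, Hk. apply C_ext; cunf; ring. }
    pose proof (Re0 _ Hik) as R1. rewrite hinner_scal in R1. cunf. lra.
Qed.

Lemma riesz_from_orth H f z : flin H f -> z <> hzero ->
  (forall k, f k = C0 -> hinner k z = C0) -> exists y, forall v, f v = hinner v y.
Proof.
  intros Hf Hz Horth.
  set (Nz := Re (hinner z z)).
  assert (HN : 0 < Nz).
  { pose proof (hinner_pos H z). destruct (Req_dec Nz 0) as [E|E]; [|unfold Nz in *; lra].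
    exfalso. apply Hz, hinner_def. apply C_ext; cunf; [exact E|apply Im_self]. }
  exists (hscal (mkC (Re (f z) / Nz) (- Im (f z) / Nz)) z).
  intro v.
  set (w := hadd (hscal (f v) z) (hopp (hscal (f z) v))).
  assert (Hw : f w = C0).
  { unfold w. rewrite (proj1 Hf), f_opp, !(proj2 Hf) by exact Hf. apply C_ext; cunf; ring. }
  pose proof (Horth w Hw) as O. unfold w in O.
  rewrite hinner_add, ip_opp_l, !hinner_scal in O.
  pose proof (f_equal Re O) as O1. pose proof (f_equal Im O) as O2.
  rewrite ip_scal_r. pose proof (Im_self H z) as Iz. fold Nz in O1, O2.
  cunf. rewrite Iz in O1, O2.
  set (a := Re (f z) / Nz) in *. set (b := Im (f z) / Nz) in *.
  assert (Ha : Re (f z) = a * Nz) by (unfold a; field; lra).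
  assert (Hb : Im (f z) = b * Nz) by (unfold b; field; lra).
  rewrite Ha, Hb in O1, O2. change (Re (hinner z z)) with Nz in O1, O2.
  replace (- Im (f z) / Nz) with (- b) by (unfold b; field; lra).
  apply C_ext; cunf.
  - apply Rmult_eq_reg_r with Nz; [|lra]. nra.
  - apply Rmult_eq_reg_r with Nz; [|lra]. nra.
Qed.

Definition NN (H : Hilbert) (x : H) := Re (hinner x x).

Lemma NN_ge0 (H : Hilbert) (x : H) : 0 <= NN H x.
Proof. apply hinner_pos. Qed.

Lemma proj (H : Hilbert) (f : H -> Defs.C) (u : H) : flin H f -> (exists M, 0 <= M /\ forall v, Cmod (f v) <= M * hnorm H v) ->
  exists k0, f k0 = C0 /\ forall k, f k = C0 -> NN H (hsub H u k0) <= NN H (hsub H u k).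
Proof.
  intros Hf [M [HM Hb]].
  set (E := fun r => exists k, f k = C0 /\ r = - NN H (hsub H u k)).
  assert (Eb : bound E).
  { exists 0. intros r [k [_ ->]]. pose proof (NN_ge0 H (hsub H u k)). lra. }
  assert (Ene : exists r, E r) by (exists (- NN H (hsub H u hzero)); exists hzero; split; [apply f_zero; exact Hf|reflexivity]).
  destruct (completeness E Eb Ene) as [m [Hub Hleast]].
  set (d := - m).
  assert (Hd1 : forall k, f k = C0 -> d <= NN H (hsub H u k)).
  { intros k Hk. assert (E (- NN H (hsub H u k))) by (exists k; auto). apply Hub in H0. unfold d; lra. }
  assert (Hd2 : forall e, 0 < e -> exists k, f k = C0 /\ NN H (hsub H u k) < d + e).
  { intros e He. destruct (classic (exists k, f k = C0 /\ NN H (hsub H u k) < d + e)) as [Y|Nn]; [exact Y|].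
    exfalso. assert (is_upper_bound E (m - e)).
    { intros r [k [Hk ->]]. destruct (Rle_or_lt (d + e) (NN H (hsub H u k))) as [L|L].
      - unfold d in L; lra.
      - exfalso; apply Nn; exists k; auto. }
    apply Hleast in H0. lra. }
  assert (Hex : forall n : nat, exists k, f k = C0 /\ NN H (hsub H u k) < d + / (INR n + 1))
    by (intro n; apply Hd2, inv_pos).
  set (kk := fun n => proj1_sig (constructive_indefinite_description _ (Hex n))).
  assert (Hkk : forall n, f (kk n) = C0 /\ NN H (hsub H u (kk n)) < d + / (INR n + 1))
    by (intro n; unfold kk; destruct (constructive_indefinite_description _ (Hex n)); simpl; auto).
  assert (Hc : forall n m, NN H (hsub H (kk n) (kk m)) <= 2 * / (INR n + 1) + 2 * / (INR m + 1)).
  { intros n m0. destruct (Hkk n) as [Fn Nn]. destruct (Hkk m0) as [Fm Nm].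
    set (mid := hscal (mkC (1/2) 0) (hadd (kk n) (kk m0))).
    assert (Fmid : f mid = C0).
    { unfold mid. rewrite (proj2 Hf), (proj1 Hf), Fn, Fm. apply C_ext; cunf; ring. }
    pose proof (Hd1 _ Fmid) as Dm.
    assert (Par : NN H (hsub H (kk n) (kk m0)) + 4 * NN H (hsub H u mid) =
                  2 * NN H (hsub H u (kk n)) + 2 * NN H (hsub H u (kk m0))).
    { unfold NN, mid. ipexp. cunf. field. }
    lra. }
  assert (Cau : forall eps, 0 < eps -> exists N, forall m n, (N <= m)%nat -> (N <= n)%nat ->
     sqrt (Re (hinner (hadd (kk m) (hopp (kk n))) (hadd (kk m) (hopp (kk n))))) < eps).
  { intros eps He. destruct (small_inv (eps * eps / 4)) as [N HN]. { nra. }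
    exists N. intros m0 n Hm Hn.
    pose proof (HN _ Hm); pose proof (HN _ Hn). pose proof (Hc m0 n).
    rewrite <- (sqrt_Rsqr eps) by lra. apply sqrt_lt_1_alt. split.
    - apply hinner_pos.
    - unfold NN, hsub in *. unfold Rsqr. lra. }
  destruct (hcomplete H kk Cau) as [k0 Hk0].
  assert (Fk0 : f k0 = C0).
  { destruct (Req_dec (Cmod (f k0)) 0) as [Z|Z]; [apply Cmod_eq0; exact Z|exfalso].
    pose proof (Cmod_ge0 (f k0)).
    set (c := Cmod (f k0)) in *.
    destruct (Hk0 (c / (M + 1))) as [N HN]. { apply Rdiv_lt_0_compat; lra. }
    specialize (HN N (le_n N)).
    pose proof (Hb (hsub H (kk N) k0)) as B.
    unfold hsub in B. rewrite (proj1 Hf), f_opp, (proj1 (Hkk N)) in B by exact Hf.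
    assert (Cmod (Cadd C0 (Copp (f k0))) = c) by (unfold c, Cmod; cunf; f_equal; ring).
    rewrite H1 in B. change (hnorm H (hadd (kk N) (hopp k0))) with
      (sqrt (Re (hinner (hadd (kk N) (hopp k0)) (hadd (kk N) (hopp k0))))) in B.
    assert (M * (c / (M+1)) < c). { apply Rmult_lt_reg_r with (M+1); [lra|]. field_simplify; nra. }
    assert (M * sqrt (Re (hinner (hadd (kk N) (hopp k0)) (hadd (kk N) (hopp k0)))) <= M * (c / (M+1))).
    { apply Rmult_le_compat_l; lra. }
    lra. }
  exists k0. split; [exact Fk0|].
  intros k Hk. apply Rle_trans with d; [|apply Hd1; exact Hk].
  destruct (Rle_or_lt (NN H (hsub H u k0)) d) as [L|L]; [exact L|exfalso].
  set (g := NN H (hsub H u k0) - d).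
  assert (Hg : 0 < g) by (unfold g; lra).
  assert (Hd0 : 0 <= d).
  { assert (is_upper_bound E 0) as U0.
    { intros r [k' [_ ->]]. pose proof (NN_ge0 H (hsub H u k')). lra. }
    apply Hleast in U0. unfold d; lra. }
  set (e0 := Rmin 1 (g / (2 * (d + 3)))).
  assert (He0 : 0 < e0) by (unfold e0; apply Rmin_pos; [lra|apply Rdiv_lt_0_compat; lra]).
  assert (He0b : e0 * (d + 3) <= g / 2).
  { unfold e0. pose proof (Rmin_r 1 (g / (2 * (d + 3)))).
    apply Rle_trans with (g / (2 * (d + 3)) * (d + 3)); [apply Rmult_le_compat_r; lra|].
    right; field; lra. }
  assert (He01 : e0 <= 1) by apply Rmin_l.
  destruct (Hk0 e0 He0) as [N1 HN1].
  destruct (small_inv (g / 4)) as [N2 HN2]. { lra. }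
  set (n := Nat.max N1 N2).
  specialize (HN1 n (Nat.le_max_l _ _)). specialize (HN2 n (Nat.le_max_r _ _)).
  destruct (Hkk n) as [_ Hn].
  pose proof (inv_le1 n).
  assert (Ev : hsub H u k0 = hadd (hsub H u (kk n)) (hsub H (kk n) k0)).
  { apply vec_eq. intro w. ipexp. apply C_ext; cunf; ring. }
  pose proof (hnorm_triangle H (hsub H u (kk n)) (hsub H (kk n) k0)) as T.
  rewrite <- Ev in T.
  set (s := hnorm H (hsub H u k0)) in *.
  set (r := hnorm H (hsub H u (kk n))) in *.
  set (e := hnorm H (hsub H (kk n) k0)) in *.
  assert (Es : s * s = NN H (hsub H u k0)) by apply hnorm_sq.
  assert (Er : r * r = NN H (hsub H u (kk n))) by apply hnorm_sq.
  assert (He : e < e0) by exact HN1.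
  assert (0 <= s) by apply hnorm_ge0. assert (0 <= r) by apply hnorm_ge0. assert (0 <= e) by apply hnorm_ge0.
  assert (r <= (d + 2) / 2) by nra.
  assert (s * s <= r * r + e * (2 * r + e)) by nra.
  assert (e * (2 * r + e) <= e0 * (d + 3)) by nra.
  unfold g in *. nra.
Qed.

Lemma riesz (H : Hilbert) (f : H -> Defs.C) : flin H f ->
  (exists M, 0 <= M /\ forall v, Cmod (f v) <= M * hnorm H v) ->
  exists y, forall v, f v = hinner v y.
Proof.
  intros Hf Hb.
  destruct (classic (exists u, f u <> C0)) as [[u Hu]|Hn].
  - destruct (proj H f u Hf Hb) as [k0 [Fk0 Hmin]].
    apply (riesz_from_orth H f (hsub H u k0) Hf).
    + intro Z. apply Hu. assert (f (hsub H u k0) = C0) by (rewrite Z; apply f_zero; exact Hf).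
      unfold hsub in H0. rewrite (proj1 Hf), f_opp, Fk0 in H0 by exact Hf.
      pose proof (f_equal Re H0); pose proof (f_equal Im H0). apply C_ext; cunf; lra.
    + apply orth_from_min; auto.
  - exists hzero. intro v. rewrite ip_zero_r. apply NNPP. intro N. apply Hn. exists v. exact N.
Qed.

Lemma lin_zero (H : Hilbert) (T : H -> H) : is_linear H T -> T hzero = hzero.
Proof.
  intros [Ta _]. apply vec_eq. intro w.
  pose proof (f_equal (fun x => hinner x w) (Ta hzero hzero)) as E. simpl in E.
  rewrite hadd_zero, hinner_add in E. rewrite ip_zero_l.
  set (c := hinner (T hzero) w) in *.
  pose proof (f_equal Re E); pose proof (f_equal Im E). apply C_ext; cunf; lra.
Qed.

Lemma lin_opp (H : Hilbert) (T : H -> H) x : is_linear H T -> T (hopp x) = hopp (T x).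
Proof.
  intros HT. pose proof (lin_zero H T HT) as Z. destruct HT as [Ta _]. apply vec_eq. intro w.
  pose proof (f_equal (fun x => hinner x w) (Ta x (hopp x))) as E. simpl in E.
  rewrite hadd_opp, Z, hinner_add, ip_zero_l in E. rewrite ip_opp_l.
  pose proof (f_equal Re E); pose proof (f_equal Im E). apply C_ext; cunf; lra.
Qed.

Lemma adjoint_exists (H : Hilbert) (T : H -> H) : OpBall1 H T ->
  exists S, is_adjoint H T S /\ forall z, hnorm H (S z) <= hnorm H z.
Proof.
  intros [[Ta Ts] Tn].
  assert (Hz : forall z, exists y, forall v, hinner (T v) z = hinner v y).
  { intro z. apply (riesz H (fun v => hinner (T v) z)).
    - split; intros; simpl; [rewrite Ta, hinner_add|rewrite Ts, hinner_scal]; reflexivity.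
    - exists (hnorm H z). split; [apply hnorm_ge0|]. intro v.
      apply Rle_trans with (hnorm H (T v) * hnorm H z); [apply CS|].
      rewrite (Rmult_comm (hnorm H z)).
      apply Rmult_le_compat_r; [apply hnorm_ge0|apply Tn]. }
  exists (fun z => proj1_sig (constructive_indefinite_description _ (Hz z))).
  split.
  - intros x y. destruct (constructive_indefinite_description _ (Hz y)); simpl; auto.
  - intro z. destruct (constructive_indefinite_description _ (Hz z)) as [y Hy]; simpl.
    pose proof (Hy y) as E.
    assert (Re (hinner y y) <= hnorm H y * hnorm H z).
    { rewrite <- E. apply Rle_trans with (Cmod (hinner (T y) z)); [apply Re_le_Cmod|].
      apply Rle_trans with (hnorm H (T y) * hnorm H z); [apply CS|].
      apply Rmult_le_compat_r; [apply hnorm_ge0|apply Tn]. }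
    rewrite <- hnorm_sq in H0. pose proof (hnorm_ge0 H y); pose proof (hnorm_ge0 H z).
    nra.
Qed.

Lemma dir1 (H : Hilbert) (Tc : (H -> H) -> Prop) (HTc : forall T, Tc T -> OpBall1 H T) :
  UEC_H1 H (adjoint_family H Tc) -> UEC_B1 H (phi_family H Tc).
Proof.
  intros U ps eps Hps Heps.
  destruct (U (map fst ps) eps) as [ws [delta [Hws [Hdel Hcond]]]].
  { intros z Hz. apply in_map_iff in Hz. destruct Hz as [p [<- Hp]]. apply (Hps p Hp). }
  { exact Heps. }
  exists (list_prod ws (map snd ps)), delta. split; [|split; [exact Hdel|]].
  { intros [w z] Hq. apply in_prod_iff in Hq. destruct Hq as [Hw Hz]. simpl. split; [apply Hws; exact Hw|].
    apply in_map_iff in Hz. destruct Hz as [p [<- Hp]]. apply (Hps p Hp). }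
  intros A B HA HB Hq g [T [HT ->]] [w0 z0] Hp. simpl.
  destruct (adjoint_exists H A HA) as [As [HAs HAn]].
  destruct (adjoint_exists H B HB) as [Bs [HBs HBn]].
  destruct (adjoint_exists H T (HTc T HT)) as [S [HS _]].
  assert (Hz0 : VecBall1 H z0) by apply (proj2 (Hps _ Hp)).
  assert (C1' : forall w, In w ws -> Cmod (hinner (hsub H (As z0) (Bs z0)) w) < delta).
  { intros w Hw. specialize (Hq (w, z0)). simpl in Hq.
    assert (E : hinner (hsub H (As z0) (Bs z0)) w = Cconj (hinner (hsub H (A w) (B w)) z0)).
    { unfold hsub. rewrite !hinner_add, !ip_opp_l, HAs, HBs,
        (hinner_conj H w (As z0)), (hinner_conj H w (Bs z0)). apply C_ext; cunf; ring. }
    rewrite E, Cmod_conj. apply Hq. apply in_prod_iff. split; [exact Hw|].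
    apply in_map_iff. exists (w0, z0). auto. }
  pose proof (Hcond (As z0) (Bs z0)) as K.
  assert (E : hinner (hsub H (phi H T A w0) (phi H T B w0)) z0 =
              Cconj (hinner (hsub H (S (As z0)) (S (Bs z0))) w0)).
  { unfold phi, hsub. rewrite !hinner_add, !ip_opp_l, HAs, HBs, !HS,
        (hinner_conj H w0 (S (As z0))), (hinner_conj H w0 (S (Bs z0))). apply C_ext; cunf; ring. }
  rewrite E, Cmod_conj. apply K.
  - unfold VecBall1 in *. eapply Rle_trans; [apply HAn|exact Hz0].
  - unfold VecBall1 in *. eapply Rle_trans; [apply HBn|exact Hz0].
  - exact C1'.
  - exists T. split; auto.
  - apply in_map_iff. exists (w0, z0). auto.
Qed.

Lemma dir2 (H : Hilbert) (Hinf : infinite_dimensional H) (Tc : (H -> H) -> Prop) :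
  UEC_B1 H (phi_family H Tc) -> UEC_H1 H (adjoint_family H Tc).
Proof.
  intros U zs eps Hzs Heps.
  destruct (Hinf 1%nat) as [e He]. specialize (He 0%nat 0%nat ltac:(lia) ltac:(lia)). simpl in He.
  set (e0 := e 0%nat) in *.
  assert (Ne0 : hnorm H e0 = 1) by (unfold hnorm; rewrite He; cunf; apply sqrt_1).
  destruct (U (map (fun z => (z, e0)) zs) eps) as [qs [delta [Hqs [Hd Hcond]]]].
  { intros p Hp. apply in_map_iff in Hp. destruct Hp as [z [<- Hz]]. simpl.
    split; [apply Hzs; exact Hz|unfold VecBall1; lra]. }
  { exact Heps. }
  exists (map fst qs), delta. split; [|split; [exact Hd|]].
  { intros w Hw. apply in_map_iff in Hw. destruct Hw as [q [<- Hq]]. apply (Hqs q Hq). }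
  intros x y Hx Hy Hw f [T [HT HTS]] z Hz.
  set (A := fun v => hscal (hinner v x) e0).
  set (B := fun v => hscal (hinner v y) e0).
  assert (Hball : forall x', VecBall1 H x' -> OpBall1 H (fun v => hscal (hinner v x') e0)).
  { intros x' Hx'. split; [split|].
    - intros v w. rewrite hinner_add, hscal_adds. reflexivity.
    - intros a v. rewrite hinner_scal, hscal_assoc. reflexivity.
    - intro v. rewrite hnorm_scal, Ne0, Rmult_1_r.
      eapply Rle_trans; [apply CS|]. unfold VecBall1 in Hx'.
      pose proof (hnorm_ge0 H v). pose proof (hnorm_ge0 H x'). nra. }
  pose proof (Hcond A B (Hball x Hx) (Hball y Hy)) as K.
  assert (E : hinner (hsub H (phi H T A z) (phi H T B z)) e0 = Cconj (hinner (hsub H (f x) (f y)) z)).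
  { unfold phi, A, B, hsub. rewrite !hinner_add, !ip_opp_l, !hinner_scal, He, !HTS,
      (hinner_conj H z (f x)), (hinner_conj H z (f y)). apply C_ext; cunf; ring. }
  rewrite <- Cmod_conj, <- E.
  refine (K _ (phi H T) _ (z, e0) _).
  - intros [q1 q2] Hq. simpl.
    assert (E2 : hinner (hsub H (A q1) (B q1)) q2 = Cmul (Cconj (hinner (hsub H x y) q1)) (hinner e0 q2)).
    { unfold A, B, hsub. rewrite hinner_add, ip_opp_l, !hinner_scal, hinner_add, ip_opp_l,
        (hinner_conj H x q1), (hinner_conj H y q1). apply C_ext; cunf; ring. }
    rewrite E2, Cmod_mul, Cmod_conj.
    assert (Cmod (hinner (hsub H x y) q1) < delta).
    { apply Hw. apply in_map_iff. exists (q1, q2). auto. }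
    assert (Cmod (hinner e0 q2) <= 1).
    { eapply Rle_trans; [apply CS|]. rewrite Ne0, Rmult_1_l. apply (proj2 (Hqs _ Hq)). }
    pose proof (Cmod_ge0 (hinner e0 q2)). pose proof (Cmod_ge0 (hinner (hsub H x y) q1)). nra.
  - exists T. split; auto.
  - apply in_map_iff. exists z. auto.
Qed.

Theorem proposition2 (H : Hilbert) (Hinf : infinite_dimensional H)
  (Tc : (H -> H) -> Prop) (HTc : forall T, Tc T -> OpBall1 H T) :
  UEC_H1 H (adjoint_family H Tc) <-> UEC_B1 H (phi_family H Tc).
Proof.
  split; [apply dir1; exact HTc|apply dir2; exact Hinf].
Qed.
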